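(* Let $d\ge2$, $b\ge1$ be integers and $\gamma,\nu>0$. Consider the $(d+1)\times(d+1)$ matrix $A^Q$ indexed by $0,1,\dots,d$ with $A^Q_{j,j}=-\nu$ for all $j$, $A^Q_{k,k-1}=\gamma$ for $1\le k\le d-1$, $A^Q_{d,d-1}=b\gamma$, and all other entries $0$; let $B^Q=\mathbf{e}_0$, and let $W(t)$ solve $\dot W=A^QW+W(A^Q)^T+B^Q(B^Q)^T$, $W(0)=0$. Let $V_{j,k}(s)$ denote the Laplace transform of $W_{j,k}(t)$. Then (i) for $0\le j,k\le d-1$: $V_{j,k}(s)=\dfrac{1}{s(s+2\nu)}\left(\dfrac{\gamma}{s+2\nu}\right)^{j+k}\dbinom{j+k}{k}$, equivalently $W_{j,k}(t)=\dfrac{1}{2\nu}\left(\dfrac{\gamma}{2\nu}\right)^{j+k}\dbinom{j+k}{k}\left[1-e^{-2\nu t}\sum_{\ell=0}^{j+k}\dfrac{(2\nu t)^\ell}{\ell!}\right]$; (ii) for $0\le j\le d-1$: $V_{d,j}(s)=V_{j,d}(s)=\dfrac{b}{s(s+2\nu)}\left(\dfrac{\gamma}{s+2\nu}\right)^{d+j}\dbinom{d+j}{d}$; (iii) $V_{d,d}(s)=\dfrac{b^2}{s(s+2\nu)}\left(\dfrac{\gamma}{s+2\nu}\right)^{2d}\dbinom{2d}{d}$.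
   Context: $A^Q$ is the adjacency matrix of a weighted directed path $0\to1\to\cdots\to d$ with uniform self-loop weight $-\nu$, all edge weights $\gamma$ except the last edge $(d-1)\to d$ which has weight $b\gamma$ (this is the quotient of the directed balloon graph). $\mathbf{e}_0$ is the standard basis vector for index $0$. The Laplace transform is $V(s)=\int_0^\infty e^{-st}W(t)\,dt$. *)

(* Defs.v *)
From HB Require Import structures.
From mathcomp Require Import all_boot all_order all_algebra.
From mathcomp Require Import all_classical all_reals all_analysis.
Set Implicit Arguments. Unset Strict Implicit. Unset Printing Implicit Defensive.
Import Order.TTheory GRing.Theory Num.Theory.
Local Open Scope ring_scope.

Definition AQ (R : ringType) (d : nat) (b gamma nu : R) : 'M[R]_d.+1 :=
  \matrix_(i, j)
    (if i == j then - nu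
     else if (i == j.+1 :> nat) then (if (i == d :> nat) then b * gamma else gamma)
     else 0).

Definition BQ (R : ringType) (d : nat) : 'cV[R]_d.+1 :=
  \col_i (if (i == 0 :> nat) then 1 else 0).

(* Main.v *)
Require Import Defs.
From HB Require Import structures.
From mathcomp Require Import all_boot all_order all_algebra.
From mathcomp Require Import all_classical all_reals all_analysis.
Import Order.TTheory GRing.Theory Num.Theory.
Import numFieldNormedType.Exports.
Local Open Scope ring_scope.
Local Open Scope classical_set_scope.
Set Implicit Arguments.

Definition Sx {R : realType} (nu : R) (n : nat) (t : R) : R :=
  \sum_(0 <= l < n) (2 * nu * t) ^+ l / (l`!)%:R.
Definition Gf {R : realType} (nu : R) (n : nat) (t : R) : R :=
  1 - expR (- (2 * nu * t)) * Sx nu n t.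

Lemma derD {R : realType} (f g : R -> R) (x df dg : R) :
  is_derive x 1 f df -> is_derive x 1 g dg -> is_derive x 1 (fun t => f t + g t) (df + dg).
Proof. move=> hf hg; exact: is_deriveD. Qed.
Lemma derM {R : realType} (f g : R -> R) (x df dg : R) :
  is_derive x 1 f df -> is_derive x 1 g dg ->
  is_derive x 1 (fun t => f t * g t) (f x * dg + g x * df).
Proof. move=> hf hg; exact: is_deriveM. Qed.
Lemma derZ {R : realType} (f : R -> R) (k x df : R) :
  is_derive x 1 f df -> is_derive x 1 (fun t => k * f t) (k * df).
Proof. move=> hf; have := is_deriveZ k hf. by []. Qed.
Lemma derC {R : realType} (k x : R) : is_derive x 1 (fun _ : R => k) 0.
Proof. exact: is_derive_cst. Qed.
Lemma derX {R : realType} (n : nat) (x : R) :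
  is_derive x 1 (fun t : R => t ^+ n) (n%:R * x ^+ n.-1).
Proof. have H := is_deriveX n (is_derive_id x (1:R)).
rewrite exprfctE /GRing.scale /= mulr1 in H. exact H.
Qed.
Lemma derexp {R : realType} (a x : R) :
  is_derive x 1 (fun t : R => expR (a * t)) (a * expR (a * x)).
Proof.
have H := is_derive1_comp (is_derive_expR (a * x)) (derZ a (is_derive_id x (1:R))).
rewrite mulr1 mulrC in H. exact H.
Qed.
From mathcomp Require Import zify ring lra.

Lemma termE {R : realType} (nu t : R) n :
  (2 * nu * t) ^+ n / (n`!)%:R = ((2 * nu) ^+ n / (n`!)%:R) * t ^+ n.
Proof. by rewrite exprMn mulrAC. Qed.

Lemma Sx_derive {R : realType} (nu : R) n (t : R) :
  is_derive t 1 (Sx nu n.+1) (2 * nu * Sx nu n t).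
Proof.
elim: n => [|n IH].
  have -> : Sx nu 1 = fun _ => 1.
    by apply/funext => u; rewrite /Sx big_nat1 expr0 fact0 divr1.
  by apply: is_derive_eq (derC _ _) _; rewrite /Sx big_nil mulr0.
have -> : Sx nu n.+2 = fun t => Sx nu n.+1 t + ((2*nu)^+n.+1 / (n.+1`!)%:R) * t^+n.+1.
  by apply/funext => u; rewrite /Sx big_nat_recr //= termE.
apply: is_derive_eq (derD IH (derZ _ (derX _ _))) _.
rewrite [in RHS]/Sx big_nat_recr//= mulrDr; congr (_ + _).
rewrite factS natrM /= termE.
have h1 : (n`!)%:R != 0 :> R by rewrite pnatr_eq0 -lt0n fact_gt0.
have h2 : (n.+1)%:R != 0 :> R by rewrite pnatr_eq0.
rewrite exprS. field. by rewrite h1 addrC natr1 h2.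
Qed.

Lemma G_derive {R : realType} (nu : R) n (t : R) :
  is_derive t 1 (Gf nu n.+1) (2 * nu * (Gf nu n t - Gf nu n.+1 t)).
Proof.
have -> : Gf nu n.+1 = fun t => 1 + (-1) * (expR ((-(2*nu)) * t) * Sx nu n.+1 t).
  by apply/funext => u; rewrite /Gf mulNr mul1r mulNr.
apply: is_derive_eq (derD (derC _ _) (derZ _ (derM (derexp _ _) (Sx_derive _ _ _)))) _.
rewrite /Gf -(mulNr (2*nu) t).
have E : forall e a b : R, 0 + -1 * (e * (2*nu*a) + b * (-(2*nu)*e)) = 2*nu*(1 - e*a - (1 + -1*(e*b))) by move=> *; ring.
exact: E.
Qed.

Lemma Gf0 {R : realType} (nu : R) n : Gf nu n.+1 0 = 0.
Proof.
rewrite /Gf /Sx big_nat_recl // big1 ?addr0.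
  by rewrite mulr0 expr0 fact0 divr1 oppr0 expR0 mulr1 subrr.
by move=> i _; rewrite mulr0 expr0n /= mul0r.
Qed.

Lemma Gf_0 {R : realType} (nu : R) t : Gf nu 0 t = 1.
Proof. by rewrite /Gf /Sx big_nil mulr0 subr0. Qed.

Lemma Sx_ge0 {R : realType} (nu : R) n t : 0 <= nu -> 0 <= t -> 0 <= Sx nu n t.
Proof.
move=> hn ht; apply: sumr_ge0 => i _; apply: divr_ge0; last exact: ler0n.
by apply: exprn_ge0; apply: mulr_ge0 => //; apply: mulr_ge0.
Qed.

Lemma Gf_le1 {R : realType} (nu : R) n t : 0 <= nu -> 0 <= t -> Gf nu n t <= 1.
Proof.
move=> hn ht; rewrite /Gf lerBlDr lerDl; apply: mulr_ge0; first exact: expR_ge0.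
exact: Sx_ge0.
Qed.

Lemma Gdiff {R : realType} (nu : R) n t :
  Gf nu n t - Gf nu n.+1 t = expR (- (2 * nu * t)) * ((2 * nu * t) ^+ n / (n`!)%:R).
Proof. rewrite /Gf [Sx nu n.+1 t]/Sx big_nat_recr //= -/(Sx nu n t); ring. Qed.

Lemma Gf_ge0 {R : realType} (nu : R) n t : 0 <= nu -> 0 <= t -> 0 <= Gf nu n t.
Proof.
move=> hn ht; case: n => [|n]; first by rewrite Gf_0.
have [->|tp] := eqVneq t 0; first by rewrite Gf0.
have t0 : 0 < t by rewrite lt0r tp.
have [||c cin E] := @MVT R (Gf nu n.+1) (fun u => 2 * nu * (Gf nu n u - Gf nu n.+1 u)) 0 t t0.
- by move=> x _; exact: G_derive.
- apply: derivable_within_continuous => x _; have := G_derive nu n x; by case.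
- move: cin; rewrite in_itv /= => /andP[c0 _].
  move/eqP: E; rewrite Gf0 subr0 => /eqP ->.
  apply: mulr_ge0; last by rewrite subr0 ltW.
  rewrite Gdiff; apply: mulr_ge0; first by apply: mulr_ge0 => //; rewrite mulr_ge0.
  apply: mulr_ge0; first exact: expR_ge0.
  apply: divr_ge0; last exact: ler0n.
  by apply: exprn_ge0; apply: mulr_ge0 => //; [apply: mulr_ge0|apply: ltW].
Qed.

Fixpoint Hf {R : realType} (s nu : R) (m : nat) (t : R) : R :=
  match m with
  | 0 => - expR (- s * t) / s
  | m'.+1 => (2 * nu * Hf s nu m' t - expR (- s * t) * Gf nu m t) / (s + 2 * nu)
  end.

Lemma Hf_derive {R : realType} (s nu : R) m (t : R) : 0 < s -> 0 < nu ->
  is_derive t 1 (Hf s nu m) (expR (- s * t) * Gf nu m t).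
Proof.
move=> s0 n0.
have sn : s + 2 * nu != 0 by rewrite gt_eqF // addr_gt0 // mulr_gt0.
have s0' : s != 0 by rewrite gt_eqF.
elim: m t => [|m IH] t.
  have -> : Hf s nu 0 = fun t => (- s^-1) * expR (- s * t).
    by apply/funext => u /=; rewrite !mulNr mulrC.
  apply: is_derive_eq (derZ _ (derexp _ _)) _.
  rewrite Gf_0 mulr1 mulrA mulrNN mulVf //; exact: mul1r.
have -> : Hf s nu m.+1 = fun t => (s + 2 * nu)^-1 *
    (2 * nu * Hf s nu m t + (-1) * (expR (- s * t) * Gf nu m.+1 t)).
  by apply/funext => u /=; rewrite mulrC mulN1r.
apply: is_derive_eq (derZ _ (derD (derZ _ (IH t))
   (derZ _ (derM (derexp _ _) (G_derive _ _ _))))) _.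
by field.
Qed.

Lemma Hf0 {R : realType} (s nu : R) m : 0 < s -> 0 < nu ->
  Hf s nu m 0 = - (2 * nu / (s + 2 * nu)) ^+ m / s.
Proof.
move=> s0 n0.
have sn : s + 2 * nu != 0 by rewrite gt_eqF // addr_gt0 // mulr_gt0.
have s0' : s != 0 by rewrite gt_eqF.
elim: m => [|m IH] /=; first by rewrite mulr0 expR0 expr0.
rewrite IH Gf0 mulr0 subr0 exprS; field.
by rewrite sn s0'.
Qed.

Lemma Hf_bound {R : realType} (s nu : R) m : 0 < s -> 0 < nu ->
  exists B : R, forall t, 0 <= t -> `|Hf s nu m t| <= B * expR (- s * t).
Proof.
move=> s0 n0.
have sp : 0 < s + 2 * nu by rewrite addr_gt0 // mulr_gt0.
have n2 : 0 < 2 * nu by rewrite mulr_gt0.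
elim: m => [|m [B hB]].
  exists s^-1 => t t0 /=; rewrite normrM normrN normfV !gtr0_norm ?expR_gt0 //.
  by rewrite mulrC.
exists ((2 * nu * B + 1) / (s + 2 * nu)) => t t0 /=.
rewrite normrM normfV (gtr0_norm sp) ler_pdivrMr //.
have -> : (2 * nu * B + 1) / (s + 2 * nu) * expR (- s * t) * (s + 2 * nu)
   = 2 * nu * (B * expR (- s * t)) + expR (- s * t).
  by field; rewrite gt_eqF.
apply: le_trans (ler_normB _ _) _; apply: lerD.
  by rewrite normrM (gtr0_norm n2) ler_pM2l // hB.
rewrite normrM gtr0_norm ?expR_gt0 // (ger0_norm (Gf_ge0 _ _ _ (ltW n0) t0)).
by rewrite ler_piMr ?expR_ge0 // Gf_le1 // ltW.
Qed.

Lemma cvg_bound {R : realType} (f : R -> R) (B s : R) : 0 < s ->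
  (forall t, 0 <= t -> `|f t| <= B * expR (- s * t)) -> f t @[t --> +oo] --> 0.
Proof.
move=> s0 hb.
have hb' : forall t, 0 <= t -> `|f t| <= (`|B| + 1) * expR (- s * t).
  move=> t t0; apply: le_trans (hb t t0) _; apply: ler_wpM2r; first exact: expR_ge0.
  have := ler_norm B; lra.
have Bp : 0 < `|B| + 1 by rewrite ltr_wpDl.
apply/cvgrPdist_le => e e0; near=> t.
have t0 : 0 <= t by near: t; apply: nbhs_pinfty_ge; exact: num_real.
have tb : (`|B| + 1) / (e * s) <= t.
  by near: t; apply: nbhs_pinfty_ge; exact: num_real.
rewrite sub0r normrN; apply: le_trans (hb' t t0) _.
rewrite mulNr expRN -ler_pdivlMl // [_^-1 * e]mulrC -invf_div lef_pV2 ?posrE ?expR_gt0 ?divr_gt0 //.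
apply: le_trans (expR_ge1Dx _).
have : (`|B| + 1) / e <= s * t.
  have -> : (`|B| + 1) / e = s * ((`|B| + 1) / (e * s)).
    by field; rewrite !gt_eqF.
  by rewrite ler_pM2l.
move=> h; apply: le_trans h _; rewrite lerDr; exact: ler01.
Unshelve. all: end_near.
Qed.

Lemma laplace {R : realType} (f : R -> R) (K s nu : R) n : 0 < s -> 0 < nu -> 0 <= K ->
  (forall t, f t = K * Gf nu n.+1 t) ->
  (@lebesgue_measure R).-integrable `[0%R, +oo[%classic
     (fun t : R => ((expR (- s * t) * f t)%R)%:E) /\
  (\int[(@lebesgue_measure R)]_(t in `[0%R, +oo[%classic)
     ((expR (- s * t) * f t)%R)%:E)%E = (K * (2 * nu / (s + 2 * nu)) ^+ n.+1 / s)%:E.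
Proof.
move=> s0 n0 K0 hf.
have -> : f = fun t => K * Gf nu n.+1 t by apply/funext => t; exact: hf.
set g := fun t : R => expR (- s * t) * (K * Gf nu n.+1 t).
set F := fun t : R => K * Hf s nu n.+1 t.
have dF (t : R) : is_derive t 1 F (g t).
  by apply: is_derive_eq (derZ K (Hf_derive _ _ _ t s0 n0)) _; rewrite /g mulrCA.
have dg (t : R) : derivable g t 1.
  by have [] := derM (derexp (- s) t) (derZ K (G_derive nu n t)).
have g0 t : 0 <= t -> 0 <= g t.
  move=> t0; apply: mulr_ge0; first exact: expR_ge0.
  by apply: mulr_ge0 => //; apply: Gf_ge0 => //; rewrite ltW.
have cg : continuous g.
  by move=> x; apply: differentiable_continuous; apply/derivable1_diffP.
have Fl : F t @[t --> +oo] --> 0.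
  have [B hB] := Hf_bound s nu n.+1 s0 n0.
  apply: (@cvg_bound _ _ (K * B) s s0) => t t0.
  by rewrite /F normrM (ger0_norm K0) -mulrA ler_wpM2l // hB.
have hint : (\int[(@lebesgue_measure R)]_(t in `[0%R, +oo[%classic) (g t)%:E)%E
    = (0 - F 0)%:E.
  apply: (ge0_continuous_FTC2y g0).
  - exact: continuous_subspaceT.
  - exact: Fl.
  - by move=> x _; have [] := dF x.
  - apply: cvg_at_right_filter; apply: differentiable_continuous.
    by apply/derivable1_diffP; have [] := dF 0.
  - by move=> x _; rewrite derive1E; exact: derive_val.
split.
  apply/integrableP; split.
    by apply/measurable_realfun.measurable_EFinP; apply: measurable_funTS; exact: measurable_realfun.continuous_measurable_fun.
  have -> : (\int[(@lebesgue_measure R)]_(t in `[0%R, +oo[%classic) `|(g t)%:E|)%E = (\int[(@lebesgue_measure R)]_(t in `[0%R, +oo[%classic) (g t)%:E)%E; last by rewrite hint ltry.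
  apply: eq_integral => t; rewrite inE /= in_itv /= andbT => t0.
  by rewrite ger0_norm // g0.
rewrite hint /F Hf0 //; congr (_%:E).
by rewrite sub0r mulNr mulrN opprK mulrA.
Qed.
Definition aco {R : ringType} (d : nat) (b gamma : R) (i : nat) : R :=
  if i == d then b * gamma else gamma.

Lemma AQ_mul {R : ringType} (d : nat) (b gamma nu : R) (M : 'M[R]_d.+1) (i k : 'I_d.+1) :
  (AQ d b gamma nu *m M) i k = - nu * M i k +
    (if (0 < i)%N then aco d b gamma i * M (inord i.-1) k else 0).
Proof.
rewrite mxE (bigD1 i) //= mxE eqxx; congr (_ + _).
case: i => [[|i] hi] /=.
  rewrite big1 // => j hj; rewrite mxE /= eq_sym (negbTE hj) /=.
  by rewrite mul0r.
have hi' : (i < d.+1)%N by apply: ltn_trans hi.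
rewrite (bigD1 (inord i)) /=; last by apply/eqP => /(congr1 val) /=; rewrite inordK //; lia.
rewrite big1 ?addr0.
  rewrite mxE /= inordK // eqE /= ifN; last by rewrite inordK //; apply/eqP; lia.
  by rewrite eqxx /aco.
move=> j /andP [h1 h2]; rewrite mxE /= ifN; last by rewrite eq_sym.
rewrite ifN ?mul0r //; apply/negP => /eqP [] hj.
by move: h2; rewrite hj; apply/negP; rewrite negbK; apply/eqP/val_inj; rewrite /= inordK.
Qed.

Lemma mulAT {R : comRingType} (d : nat) (b gamma nu : R) (M : 'M[R]_d.+1) (i k : 'I_d.+1) :
  (M *m (AQ d b gamma nu)^T) i k = - nu * M i k +
    (if (0 < k)%N then aco d b gamma k * M i (inord k.-1) else 0).
Proof.
have -> : M *m (AQ d b gamma nu)^T = (AQ d b gamma nu *m M^T)^T.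
  by rewrite trmx_mul trmxK.
by rewrite mxE AQ_mul !mxE.
Qed.

Lemma BBT {R : ringType} (d : nat) (i k : 'I_d.+1) :
  (BQ R d *m (BQ R d)^T) i k = if ((i == 0 :> nat) && (k == 0 :> nat)) then 1 else 0.
Proof.
rewrite mxE big_ord1 !mxE.
by case: (i == 0 :> nat); case: (k == 0 :> nat); rewrite ?mul1r ?mul0r ?mulr0.
Qed.

Definition wv {R : realType} (d : nat) (bb : R) (j : nat) : R := if j == d then bb else 1.
Definition cf {R : realType} (d : nat) (bb gamma nu : R) (j k : nat) : R :=
  wv d bb j * wv d bb k / (2 * nu) * (gamma / (2 * nu)) ^+ (j + k) * ('C(j + k, k))%:R.

Lemma cf_rec {R : realType} (d : nat) (bb gamma nu : R) (j k : nat) :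
  0 < nu -> (j <= d)%N -> (k <= d)%N -> (0 < j + k)%N ->
  (if (0 < j)%N then aco d bb gamma j * cf d bb gamma nu j.-1 k else 0) +
  (if (0 < k)%N then aco d bb gamma k * cf d bb gamma nu j k.-1 else 0) =
  2 * nu * cf d bb gamma nu j k.
Proof.
move=> n0 hj hk hjk.
have nz : nu != 0 by rewrite gt_eqF.
rewrite /cf /aco.
case: j hj hjk => [|j] hj hjk; case: k hk hjk => [|k] hk hjk //=.
- have hkd : (k == d) = false by apply/eqP; lia.
  rewrite add0r add0n !binn /wv hkd.
  case: (k.+1 == d); rewrite exprS; field; by rewrite nz.
- have hjd : (j == d) = false by apply/eqP; lia.
  rewrite addr0 !addn0 !bin0 /wv hjd.
  case: (j.+1 == d); rewrite exprS; field; by rewrite nz.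
- have hkd : (k == d) = false by apply/eqP; lia.
  have hjd : (j == d) = false by apply/eqP; lia.
  rewrite /wv hjd hkd.
  have e1 : 'C(j + k.+1, k.+1) = 'C((j+k).+1, k.+1) by rewrite addnS.
  have e2 : 'C(j.+1 + k, k) = 'C((j+k).+1, k) by rewrite addSn.
  have e3 : 'C(j.+1 + k.+1, k.+1) = ('C((j+k).+1, k.+1) + 'C((j+k).+1,k))%N.
    by rewrite addSn addnS binS.
  have e4 : (j + k.+1 = (j+k).+1)%N by rewrite addnS.
  have e5 : (j.+1 + k = (j+k).+1)%N by rewrite addSn.
  have e6 : (j.+1 + k.+1 = (j+k).+2)%N by rewrite addSn addnS.
  rewrite e1 e2 e3 e4 e5 e6 natrD.
  set c1 := ('C(_, k.+1))%:R; set c2 := ('C(_, k))%:R.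
  rewrite !exprS.
  case: (j.+1 == d); case: (k.+1 == d); field; by rewrite nz.
Qed.

Lemma ode_zero {R : realType} (nu : R) (D : R -> R) :
  (forall t : R, is_derive t 1 D (- (2 * nu) * D t)) -> D 0 = 0 -> forall t, D t = 0.
Proof.
move=> hD h0 t.
have E : forall x : R, is_derive x 1 (fun u => expR ((2 * nu) * u) * D u) 0.
  move=> x; apply: is_derive_eq (derM (derexp _ _) (hD x)) _.
  have F : forall e y : R, e * (- (2 * nu) * y) + y * (2 * nu * e) = 0 by move=> *; ring.
  exact: F.
have := is_derive_0_is_cst t 0 E.
rewrite /= mulr0 expR0 h0 mulr0 => /eqP; rewrite mulf_eq0 expR_eq0 /=.
by move/eqP.
Qed.

Lemma W_form {R : realType} (d b : nat) (gamma nu : R) (W : R -> 'M[R]_d.+1) :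
  (1 <= d)%N -> 0 < nu -> W 0 = 0 ->
  (forall (t : R) (i k : 'I_d.+1),
     is_derive t 1 (fun u => W u i k)
       ((AQ d b%:R gamma nu *m W t + W t *m (AQ d b%:R gamma nu)^T
         + BQ R d *m (BQ R d)^T) i k)) ->
  forall n j k, (j <= d)%N -> (k <= d)%N -> (j + k = n)%N ->
  forall t, W t (inord j) (inord k) = cf d b%:R gamma nu j k * Gf nu n.+1 t.
Proof.
move=> d1 n0 W0 hW.
have nz : nu != 0 by rewrite gt_eqF.
have hder : forall (j k : nat), (j <= d)%N -> (k <= d)%N -> forall t : R,
   is_derive t 1 (fun u => W u (inord j) (inord k))
     (- nu * W t (inord j) (inord k) +
      (if (0 < j)%N then aco d b%:R gamma j * W t (inord j.-1) (inord k) else 0) +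
      (- nu * W t (inord j) (inord k) +
      (if (0 < k)%N then aco d b%:R gamma k * W t (inord j) (inord k.-1) else 0)) +
      (if ((j == 0) && (k == 0))%N then 1 else 0)).
  move=> j k hj hk t; apply: is_derive_eq (hW t (inord j) (inord k)) _.
  have -> : forall (X Y Z : 'M[R]_d.+1) i k, (X + Y + Z) i k = X i k + Y i k + Z i k.
    by move=> X Y Z i k'; rewrite !mxE.
  by rewrite AQ_mul mulAT BBT !inordK.
elim => [|n IH] j k hj hk hjk t.
  have j0 : j = 0%N by lia.
  have k0 : k = 0%N by lia.
  subst j k.
  set D := fun u => W u (inord 0) (inord 0) + (- cf d b%:R gamma nu 0 0) * Gf nu 1 u.
  suff : D t = 0.
    by rewrite /D => /eqP; rewrite addr_eq0 mulNr opprK => /eqP.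
  apply: (@ode_zero _ nu D); last first.
    by rewrite /D W0 Gf0 mulr0 addr0 mxE.
  move=> x.
  apply: is_derive_eq (derD (hder 0%N 0%N (leq0n _) (leq0n _) x) (derZ _ (G_derive _ _ _))) _.
  rewrite /D /= Gf_0 /cf /wv /=.
  have -> : (0 == d) = false by apply/negbTE; rewrite eq_sym -lt0n.
  rewrite expr0 bin0 !mulr1 !addr0.
  set w := W x _ _; set g := Gf nu 1 x.

  field; by rewrite nz.
set D := fun u => W u (inord j) (inord k) + (- cf d b%:R gamma nu j k) * Gf nu n.+2 u.
suff : D t = 0.
  by rewrite /D => /eqP; rewrite addr_eq0 mulNr opprK => /eqP.
apply: (@ode_zero _ nu D); last first.
  by rewrite /D W0 Gf0 mulr0 addr0 mxE.
move=> x.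
apply: is_derive_eq (derD (hder j k hj hk x) (derZ _ (G_derive _ _ _))) _.
have X1 : (if (0 < j)%N then aco d b%:R gamma j * W x (inord j.-1) (inord k) else 0)
   = (if (0 < j)%N then aco d b%:R gamma j * cf d b%:R gamma nu j.-1 k else 0) * Gf nu n.+1 x.
  case: ifP => hj0; last by rewrite mul0r.
  have e1 : (j.-1 <= d)%N by rewrite (leq_trans (leq_pred _)).
  have e2 : (j.-1 + k)%N = n by rewrite -subn1 addnBAC // hjk subn1.
  by rewrite (IH j.-1 k e1 hk e2) mulrA.
have X2 : (if (0 < k)%N then aco d b%:R gamma k * W x (inord j) (inord k.-1) else 0)
   = (if (0 < k)%N then aco d b%:R gamma k * cf d b%:R gamma nu j k.-1 else 0) * Gf nu n.+1 x.
  case: ifP => hk0; last by rewrite mul0r.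
  have e1 : (k.-1 <= d)%N by rewrite (leq_trans (leq_pred _)).
  have e2 : (j + k.-1)%N = n by rewrite -subn1 addnBA // hjk subn1.
  by rewrite (IH j k.-1 hj e1 e2) mulrA.
have jk0 : (0 < j + k)%N by rewrite hjk.
have C := cf_rec d b%:R gamma nu j k n0 hj hk jk0.
have -> : ((j == 0%N) && (k == 0%N)) = false.
  apply/negbTE/negP => /andP[/eqP hj0 /eqP hk0]; move: hjk; by rewrite hj0 hk0.
rewrite X1 X2 /D.
move: C.
set P := (if (0 < j)%N then _ else _); set Q := (if (0 < k)%N then _ else _).
set c := cf _ _ _ _ _ _; set w := W x _ _; set g1 := Gf nu n.+1 x; set g2 := Gf nu n.+2 x.
move=> C.
have QE : Q = 2 * nu * c - P by rewrite -C addrAC subrr add0r.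
rewrite QE; ring.
Qed.
Lemma lapE {R : realType} (w1 w2 C gamma s nu : R) n : 0 < s -> 0 < nu ->
  w1 * w2 / (2 * nu) * (gamma / (2 * nu)) ^+ n * C * (2 * nu / (s + 2 * nu)) ^+ n.+1 / s
  = w1 * w2 / (s * (s + 2 * nu)) * (gamma / (s + 2 * nu)) ^+ n * C.
Proof.
move=> s0 n0.
have sp : s + 2 * nu != 0 by rewrite gt_eqF // addr_gt0 // mulr_gt0.
have nz : nu != 0 by rewrite gt_eqF.
have E : (gamma / (s + 2 * nu)) ^+ n = (gamma / (2 * nu)) ^+ n * (2 * nu / (s + 2 * nu)) ^+ n.
  rewrite -exprMn; congr (_ ^+ _); field; by rewrite sp nz.
rewrite E exprS.
set A := (gamma / (2 * nu)) ^+ n; set B := (2 * nu / (s + 2 * nu)) ^+ n.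
field; by rewrite sp nz gt_eqF.
Qed.

Lemma cf_ge0 {R : realType} d b (gamma nu : R) j k : 0 < gamma -> 0 < nu ->
  0 <= cf d b%:R gamma nu j k.
Proof.
move=> g0 n0; rewrite /cf /wv.
have w0 : forall i, 0 <= (if i == d then b%:R else 1 : R).
  by move=> i; case: ifP => _; [exact: ler0n | exact: ler01].
apply: mulr_ge0; last exact: ler0n.
apply: mulr_ge0; last by apply: exprn_ge0; apply: divr_ge0; rewrite ltW // mulr_gt0.
apply: divr_ge0; last by rewrite ltW // mulr_gt0.
exact: mulr_ge0.
Qed.

Unset Implicit Arguments.
Local Open Scope classical_set_scope.
Theorem mainTheorem3 (R : realType) (d b : nat) (gamma nu : R)
  (W : R -> 'M[R]_d.+1) :
  (2 <= d)%N -> (1 <= b)%N -> 0 < gamma -> 0 < nu ->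
  W 0 = 0 ->
  (forall (t : R) (i k : 'I_d.+1),
     is_derive t 1 (fun u => W u i k)
       ((AQ d b%:R gamma nu *m W t + W t *m (AQ d b%:R gamma nu)^T
         + BQ R d *m (BQ R d)^T) i k)) ->
  (* (i) *)
  (forall (j k : 'I_d.+1), (j < d)%N -> (k < d)%N ->
     (forall s : R, 0 < s ->
        (@lebesgue_measure R).-integrable `[0%R, +oo[%classic
          (fun t : R => ((expR (- s * t) * W t j k)%R)%:E) /\
        ((\int[(@lebesgue_measure R)]_(t in `[0%R, +oo[%classic)
            ((expR (- s * t) * W t j k)%R)%:E)%E
         = (1 / (s * (s + 2 * nu)) * (gamma / (s + 2 * nu)) ^+ (j + k)
            * ('C(j + k, k))%:R)%:E)) /\
     (forall t : R, 0 <= t ->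
        W t j k = 1 / (2 * nu) * (gamma / (2 * nu)) ^+ (j + k) * ('C(j + k, k))%:R
                  * (1 - expR (- (2 * nu * t))
                         * \sum_(0 <= l < (j + k).+1) (2 * nu * t) ^+ l / (l`!)%:R))) /\
  (* (ii) *)
  (forall (j : 'I_d.+1), (j < d)%N ->
     forall s : R, 0 < s ->
       (@lebesgue_measure R).-integrable `[0%R, +oo[%classic
         (fun t : R => ((expR (- s * t) * W t ord_max j)%R)%:E) /\
       (@lebesgue_measure R).-integrable `[0%R, +oo[%classic
         (fun t : R => ((expR (- s * t) * W t j ord_max)%R)%:E) /\
       (\int[(@lebesgue_measure R)]_(t in `[0%R, +oo[%classic) ((expR (- s * t) * W t ord_max j)%R)%:E)%E
         = (b%:R / (s * (s + 2 * nu)) * (gamma / (s + 2 * nu)) ^+ (d + j)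
            * ('C(d + j, d))%:R)%:E /\
       (\int[(@lebesgue_measure R)]_(t in `[0%R, +oo[%classic) ((expR (- s * t) * W t j ord_max)%R)%:E)%E
         = (b%:R / (s * (s + 2 * nu)) * (gamma / (s + 2 * nu)) ^+ (d + j)
            * ('C(d + j, d))%:R)%:E) /\
  (* (iii) *)
  (forall s : R, 0 < s ->
     (@lebesgue_measure R).-integrable `[0%R, +oo[%classic
       (fun t : R => ((expR (- s * t) * W t ord_max ord_max)%R)%:E) /\
     (\int[(@lebesgue_measure R)]_(t in `[0%R, +oo[%classic) ((expR (- s * t) * W t ord_max ord_max)%R)%:E)%E
       = ((b%:R) ^+ 2 / (s * (s + 2 * nu)) * (gamma / (s + 2 * nu)) ^+ (2 * d)
          * ('C(2 * d, d))%:R)%:E).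
Proof.
move=> d2 b1 g0 n0 W0 hW.
have d1 : (1 <= d)%N by apply: leq_trans d2.
have hWf : forall (j k : 'I_d.+1) (t : R),
    W t j k = cf d b%:R gamma nu j k * Gf nu (j + k).+1 t.
  move=> j k t.
  rewrite -[in LHS](inord_val j) -[in LHS](inord_val k).
  exact: (@W_form R d b gamma nu W d1 n0 W0 hW (j + k) j k (ltn_ord j) (ltn_ord k) erefl t).
have wd : wv d (b%:R : R) d = b%:R by rewrite /wv eqxx.
have wl : forall j : 'I_d.+1, (j < d)%N -> wv d (b%:R : R) j = 1.
  by move=> j hj; rewrite /wv ifN // neq_ltn hj.
have lap := fun (j k : 'I_d.+1) s (s0 : 0 < s) =>
  @laplace R (fun t => W t j k) (cf d b%:R gamma nu j k) s nu (j + k) s0 n0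
     (cf_ge0 _ _ _ _ _ _ g0 n0) (hWf j k).
split; [|split].
- move=> j k hj hk; split.
    move=> s s0; have [hi hv] := lap j k s s0; split => //.
    rewrite hv /cf wl // wl // lapE //; by rewrite mul1r.
  move=> t t0; rewrite hWf /cf wl // wl // mul1r /Gf /Sx.
  by [].
- move=> j hj s s0.
  have [hi1 hv1] := lap ord_max j s s0.
  have [hi2 hv2] := lap j ord_max s s0.
  split => //; split => //; split.
    rewrite hv1 /cf /= wd wl // lapE // mulr1.
    by rewrite -[in RHS](bin_sub (leq_addr j d)) addKn.
  rewrite hv2 /cf /= wd wl // lapE // mul1r.
  by rewrite addnC.
- move=> s s0; have [hi hv] := lap ord_max ord_max s s0; split => //.
  rewrite hv /cf /= wd lapE // expr2 addnn -mul2n.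
  by [].
Qed.
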